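(* Let $U\subset(0,1)^d$ be open, $A,B>0$, $C\ge0$, $r$ a positive integer or $+\infty$, and $l\ge1$ an integer. If $f_1,\ldots,f_l:U\to\mathbb{R}$ are $(A,B,C)$-mild up to order $r$, then the product $f_1\cdots f_l$ is $(lA,B^l,C)$-mild up to order $r$. Likewise, if $f_1,\ldots,f_l$ are weakly $(A,B,C)$-mild up to order $r$, then $f_1\cdots f_l$ is weakly $(lA,B^l,C)$-mild up to order $r$.
   Context: For $U$ open, $g:U\to\mathbb{R}$ is $(A,B,C)$-mild up to order $r$ if it is $C^r$ and $|g^{(\nu)}(x)|\le B^{C+1}A^{|\nu|}|\nu|!^{C+1}$ for all $x\in U$ and $\nu\in\mathbb{N}^d$ with $|\nu|\le r$; it is weakly $(A,B,C)$-mild up to order $r$ (for $U\subset(0,1)^d$) if it is $C^r$ and $|g^{(\nu)}(x)|\le B^{C+1}A^{|\nu|}|\nu|!^{C+1}/x^\nu$ for the same $x,\nu$. Here $g^{(\nu)}=\partial^{|\nu|}g/\partial x_1^{\nu_1}\cdots\partial x_d^{\nu_d}$, $|\nu|=\sum\nu_i$, $x^\nu=\prod x_i^{\nu_i}$; order $+\infty$ means $C^\infty$ and all $\nu$. *)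

(* Defs.v *)
From HB Require Import structures.
From mathcomp Require Import all_boot all_order all_algebra.
From mathcomp Require Import all_classical all_reals all_analysis.
Set Implicit Arguments. Unset Strict Implicit. Unset Printing Implicit Defensive.
Import Order.TTheory GRing.Theory Num.Theory.
Import numFieldNormedType.Exports.
Local Open Scope ring_scope.
Local Open Scope classical_set_scope.

(* Points of R^d are row vectors 'rV[R]_d; coordinate i of x is x ord0 i. *)

Definition ebasis (R : realType) (d : nat) (i : 'I_d) : 'rV[R]_d :=
  delta_mx ord0 i.

(* partial derivative in coordinate i (total operator; meaningful where it exists) *)
Definition pderiv (R : realType) (d : nat) (i : 'I_d)
  (g : 'rV[R]_d -> R) : 'rV[R]_d -> R :=
  fun x => 'D_(ebasis R i) g x.

(* iterated partial derivative along a list of coordinates; the LAST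
   element of the list is differentiated first *)
Definition iter_pderiv (R : realType) (d : nat) (s : seq 'I_d)
  (g : 'rV[R]_d -> R) : 'rV[R]_d -> R :=
  foldr (@pderiv R d) g s.

Definition mi_abs (d : nat) (nu : 'I_d -> nat) : nat := (\sum_(i < d) nu i)%N.

Definition mderiv (R : realType) (d : nat) (nu : 'I_d -> nat)
  (g : 'rV[R]_d -> R) : 'rV[R]_d -> R :=
  iter_pderiv (flatten [seq nseq (nu i) i | i <- enum 'I_d]) g.

Definition mpow (R : realType) (d : nat) (x : 'rV[R]_d) (nu : 'I_d -> nat) : R :=
  \prod_(i < d) (x ord0 i) ^+ (nu i).

(* orders: Some n = finite order n, None = +infinity *)
Definition le_ord (k : nat) (r : option nat) : bool :=
  if r is Some n then (k <= n)%N else true.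
Definition lt_ord (k : nat) (r : option nat) : bool :=
  if r is Some n then (k < n)%N else true.

Definition isCr (R : realType) (d : nat) (U : set 'rV[R]_d) (r : option nat)
  (g : 'rV[R]_d -> R) : Prop :=
  (forall s : seq 'I_d, lt_ord (size s) r ->
     forall (i : 'I_d) x, U x -> derivable (iter_pderiv s g) x (ebasis R i)) /\
  (forall s : seq 'I_d, le_ord (size s) r ->
     forall x, U x -> {for x, continuous (iter_pderiv s g)}).

Definition mild (R : realType) (d : nat) (U : set 'rV[R]_d) (A B C : R)
  (r : option nat) (g : 'rV[R]_d -> R) : Prop :=
  isCr U r g /\
  forall (nu : 'I_d -> nat) x, le_ord (mi_abs nu) r -> U x ->
    `|mderiv nu g x| <= B `^ (C + 1) * A ^+ (mi_abs nu)
                        * ((mi_abs nu)`!%:R) `^ (C + 1).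

Definition weakly_mild (R : realType) (d : nat) (U : set 'rV[R]_d) (A B C : R)
  (r : option nat) (g : 'rV[R]_d -> R) : Prop :=
  isCr U r g /\
  forall (nu : 'I_d -> nat) x, le_ord (mi_abs nu) r -> U x ->
    `|mderiv nu g x| <= B `^ (C + 1) * A ^+ (mi_abs nu)
                        * ((mi_abs nu)`!%:R) `^ (C + 1) / mpow x nu.

Definition unit_cube (R : realType) (d : nat) : set 'rV[R]_d :=
  [set x | forall i : 'I_d, 0 < x ord0 i < 1].

(* Main.v *)
Require Import Defs.
From HB Require Import structures.
From mathcomp Require Import all_boot all_order all_algebra.
From mathcomp Require Import all_classical all_reals all_analysis.
Import Order.TTheory GRing.Theory Num.Theory.
Import numFieldNormedType.Exports.
Local Open Scope ring_scope.
Local Open Scope classical_set_scope.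
From mathcomp Require Import ring lra.
Set Implicit Arguments. Unset Strict Implicit.
Definition ordle (d : nat) : rel 'I_d := fun i j => (val i <= val j)%N.
Definition flat {d : nat} (nu : 'I_d -> nat) : seq 'I_d :=
  flatten [seq nseq (nu i) i | i <- enum 'I_d].

Lemma ordle_trans d : transitive (@ordle d).
Proof. move=> a b c; rewrite /ordle; exact: leq_trans. Qed.
Lemma ordle_anti d : antisymmetric (@ordle d).
Proof. move=> a b /andP[h1 h2]; apply: val_inj; apply/eqP; by rewrite eqn_leq; apply/andP. Qed.

Lemma flat_sorted d nu : sorted (@ordle d) (flat nu).
Proof.
rewrite /flat (sorted_pairwise (@ordle_trans d)).
have : pairwise (fun i j : 'I_d => (val i < val j)%N) (enum 'I_d).
  rewrite -(sorted_pairwise (T:='I_d) (leT := fun i j : 'I_d => (val i < val j)%N)); last first.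
    by move=> a b c; exact: ltn_trans.
  have := iota_ltn_sorted 0 d; rewrite -val_enum_ord.
  by rewrite sorted_map.
elim: (enum 'I_d) => [//|a t IH] /= /andP[ha ht].
rewrite pairwise_cat IH // andbT; apply/andP; split.
  apply/allrelP => x y /nseqP[-> _] /flattenP[z /mapP[b bt ->] /nseqP[-> _]].
  by rewrite /ordle ltnW //; move/allP: ha => /(_ _ bt).
by elim: (nu a) => //= n IHn; rewrite IHn andbT; apply/allP => x /nseqP[-> _]; rewrite /ordle.
Qed.

Lemma flat_count d nu (i : 'I_d) : count_mem i (flat nu) = nu i.
Proof.
rewrite /flat count_flatten -map_comp.
rewrite (eq_map (g := fun j => if j == i then nu i else 0%N)); last first.
  by move=> j /=; rewrite count_nseq /=; case: eqP => [->|]; rewrite ?mul1n ?mul0n.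

by rewrite sumnE big_map big_enum /= -big_mkcond /= big_pred1_eq.
Qed.

Lemma size_flat d (nu : 'I_d -> nat) : size (flat nu) = mi_abs nu.
Proof.
rewrite /flat size_flatten /shape -map_comp /mi_abs sumnE big_map big_enum /=.
by apply: eq_bigr => i _; rewrite /= size_nseq.
Qed.

Lemma sorted_flat d (s : seq 'I_d) : sorted (@ordle d) s ->
  s = flat (fun i => count_mem i s).
Proof.
move=> ss; apply: (sorted_eq (@ordle_trans d) (@ordle_anti d)) => //.
  exact: flat_sorted.
by rewrite /perm_eq; apply/allP => x _ /=; rewrite flat_count.
Qed.

Definition mp {R : realType} {d : nat} (x : 'rV[R]_d) (s : seq 'I_d) : R :=
  \prod_(i <- s) x ord0 i.

Lemma mp_flat (R : realType) d (x : 'rV[R]_d) nu : mp x (flat nu) = mpow x nu.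
Proof.
rewrite /mp /flat big_flatten /= big_map /mpow big_enum /=.
apply: eq_bigr => i _; elim: (nu i) => [|n IH]; first by rewrite big_nil expr0.
by rewrite /= big_cons IH exprS.
Qed.

Fixpoint LL {d : nat} (s : seq 'I_d) : seq (seq 'I_d * seq 'I_d) :=
  if s is i :: s' then [seq (i :: p.1, p.2) | p <- LL s'] ++ [seq (p.1, i :: p.2) | p <- LL s']
  else [:: ([::], [::])].

Lemma LL_mem d (s : seq 'I_d) p : p \in LL s ->
  [/\ subseq p.1 s, subseq p.2 s & perm_eq (p.1 ++ p.2) s].
Proof.
elim: s p => [|i s IH] p /=; first by rewrite inE => /eqP -> /=.
rewrite mem_cat => /orP[] /mapP[q /IH [h1 h2 h3] ->] /=.
  rewrite eqxx h1 perm_cons h3; split => //.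
  exact: (subseq_trans h2 (subseq_cons s i)).
rewrite eqxx h2; split => //; first exact: (subseq_trans h1 (subseq_cons s i)).
by rewrite -cat1s perm_catCA /= perm_cons.
Qed.

Lemma LL_sum (R : realType) d (s : seq 'I_d) (a b : R) :
  \sum_(p <- LL s) a ^+ size p.1 * b ^+ size p.2 = (a + b) ^+ size s.
Proof.
elim: s => [|i s IH] /=; first by rewrite big_seq1 /= !expr0 mulr1.
rewrite big_cat !big_map /= exprS mulrDl -IH !mulr_sumr.
congr (_ + _).
  by apply: eq_bigr => p _; rewrite exprS mulrA.
by apply: eq_bigr => p _; rewrite exprS mulrCA.
Qed.
Lemma derivable_sumL (R : realType) d (T : eqType) (t : seq T)
  (F : T -> 'rV[R]_d -> R) x v :
  (forall p, p \in t -> derivable (F p) x v) ->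
  derivable (fun y => \sum_(p <- t) F p y) x v /\
  'D_v (fun y => \sum_(p <- t) F p y) x = \sum_(p <- t) 'D_v (F p) x.
Proof.
elim: t => [|a t IH] H.
  have -> : (fun y => \sum_(p <- [::]) F p y) = cst 0.
    by apply: funext => y; rewrite big_nil.
  by rewrite big_nil derive_cst; split => //; exact: derivable_cst.
have -> : (fun y => \sum_(p <- a :: t) F p y) = F a + (fun y => \sum_(p <- t) F p y).
  by apply: funext => y; rewrite big_cons.
have [IH1 IH2] : derivable (fun y => \sum_(p <- t) F p y) x v /\
  'D_v (fun y => \sum_(p <- t) F p y) x = \sum_(p <- t) 'D_v (F p) x.
  by apply: IH => p pt; apply: H; rewrite inE pt orbT.
have Ha : derivable (F a) x v by apply: H; rewrite inE eqxx.
split; first exact: derivableD.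
by rewrite deriveD // IH2 big_cons.
Qed.

Lemma continuous_sumL (R : realType) d (T : eqType) (t : seq T)
  (F : T -> 'rV[R]_d -> R) x :
  (forall p, p \in t -> {for x, continuous (F p)}) ->
  {for x, continuous (fun y => \sum_(p <- t) F p y)}.
Proof.
elim: t => [|a t IH] H.
  have -> : (fun y => \sum_(p <- [::]) F p y) = cst 0.
    by apply: funext => y; rewrite big_nil.
  exact: cst_continuous.
have -> : (fun y => \sum_(p <- a :: t) F p y) = F a + (fun y => \sum_(p <- t) F p y).
  by apply: funext => y; rewrite big_cons.
apply: continuousD; first by apply: H; rewrite inE eqxx.
by apply: IH => p pt; apply: H; rewrite inE pt orbT.
Qed.

Lemma derivable_mulF (R : realType) d (F G : 'rV[R]_d -> R) x v :
  derivable F x v -> derivable G x v ->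
  derivable (fun y => F y * G y) x v /\
  'D_v (fun y => F y * G y) x = F x * 'D_v G x + G x * 'D_v F x.
Proof.
move=> dF dG; split; first exact: (derivableM dF dG).
exact: (deriveM dF dG).
Qed.

Definition LS {R : realType} {d : nat} (f g : 'rV[R]_d -> R) (s : seq 'I_d) :=
  fun y => \sum_(p <- LL s) iter_pderiv p.1 f y * iter_pderiv p.2 g y.

Lemma lt_le_ord k r : lt_ord k r -> le_ord k r.
Proof. by case: r => //= n /ltnW. Qed.
Lemma le_ord_trans k m r : (k <= m)%N -> le_ord m r -> le_ord k r.
Proof. by case: r => //= n km /(leq_trans km). Qed.
Lemma lt_ord_trans k m r : (k <= m)%N -> lt_ord m r -> lt_ord k r.
Proof. by case: r => //= n km /(leq_ltn_trans km). Qed.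

Lemma LL_size1 d (s : seq 'I_d) p : p \in LL s -> (size p.1 <= size s)%N.
Proof. by move=> /LL_mem [_ _ /perm_size]; rewrite size_cat => <-; exact: leq_addr. Qed.
Lemma LL_size2 d (s : seq 'I_d) p : p \in LL s -> (size p.2 <= size s)%N.
Proof. by move=> /LL_mem [_ _ /perm_size]; rewrite size_cat => <-; exact: leq_addl. Qed.

Definition Dr {R : realType} {d : nat} (U : set 'rV[R]_d) r (f : 'rV[R]_d -> R) :=
  forall s, lt_ord (size s) r -> forall i x, U x -> derivable (iter_pderiv s f) x (ebasis R i).

Lemma leib (R : realType) d (U : set 'rV[R]_d) r f g : open U ->
  Dr U r f -> Dr U r g ->
  forall s, le_ord (size s) r -> forall x, U x ->
  iter_pderiv s (fun y => f y * g y) x = LS f g s x.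
Proof.
move=> oU df dg; elim=> [|i s IH] hs x Ux.
  by rewrite /LS /= big_seq1.
have hs' : lt_ord (size s) r by [].
rewrite /= /pderiv (near_eq_derive (f := iter_pderiv s (fun y => f y * g y)) (g := LS f g s)); last first.
  by apply: filterS (oU _ Ux) => y Uy; exact: IH (lt_le_ord hs') y Uy.
have hd : forall p, p \in LL s -> derivable (fun y => iter_pderiv p.1 f y * iter_pderiv p.2 g y) x (ebasis R i).
  move=> p pin; apply: derivableM.
    exact: (df _ (lt_ord_trans (LL_size1 pin) hs')).
  exact: (dg _ (lt_ord_trans (LL_size2 pin) hs')).
have [_ ->] := derivable_sumL hd.
rewrite /LS /= big_cat !big_map /= addrC -big_split /= big_seq [RHS]big_seq.
apply: eq_bigr => p pin.
have [_ ->] := derivable_mulF (df _ (lt_ord_trans (LL_size1 pin) hs') i x Ux)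
   (dg _ (lt_ord_trans (LL_size2 pin) hs') i x Ux).
by rewrite /pderiv [iter_pderiv p.2 g x * _]mulrC.
Qed.

Lemma isCr_mul (R : realType) d (U : set 'rV[R]_d) r f g : open U ->
  isCr U r f -> isCr U r g -> isCr U r (fun y => f y * g y).
Proof.
move=> oU [df cf] [dg cg].
have E : forall s, le_ord (size s) r -> forall x, U x ->
    {near x, LS f g s =1 iter_pderiv s (fun y => f y * g y)}.
  move=> s hs x Ux; apply: filterS (oU _ Ux) => y Uy.
  by rewrite (leib oU df dg hs Uy).
split.
  move=> s hs i x Ux.
  apply: (near_eq_derivable (E s (lt_le_ord hs) x Ux)).
  have hd : forall p, p \in LL s -> derivable (fun y => iter_pderiv p.1 f y * iter_pderiv p.2 g y) x (ebasis R i).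
    move=> p pin; apply: derivableM.
      exact: (df _ (lt_ord_trans (LL_size1 pin) hs)).
    exact: (dg _ (lt_ord_trans (LL_size2 pin) hs)).
  exact: (derivable_sumL hd).1.
move=> s hs x Ux.
have cL : {for x, continuous (LS f g s)}.
  apply: continuous_sumL => p pin.
  apply: continuousM.
    exact: (cf _ (le_ord_trans (LL_size1 pin) hs)).
  exact: (cg _ (le_ord_trans (LL_size2 pin) hs)).
rewrite /prop_for /continuous_at (leib oU df dg hs Ux).
exact: cvg_trans (near_eq_cvg (E s hs x Ux)) cL.
Qed.

Definition Mw {R : realType} {d : nat} (w : bool) (x : 'rV[R]_d) s : R :=
  if w then mp x s else 1.

Definition sb {R : realType} {d : nat} (U : set 'rV[R]_d) r (K a C : R) (w : bool) g :=
  forall s x, sorted (@ordle d) s -> le_ord (size s) r -> U x ->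
  `|iter_pderiv s g x| <= K * a ^+ size s * (size s)`!%:R `^ (C + 1) / Mw w x s.

Lemma Mw_gt0 (R : realType) d (x : 'rV[R]_d) w s : unit_cube x -> 0 < Mw w x s.
Proof.
move=> ux; case: w => //=; rewrite /mp; apply: prodr_gt0 => i _.
by case/andP: (ux i).
Qed.

Lemma Mw_mul (R : realType) d (x : 'rV[R]_d) w (s : seq 'I_d) p : p \in LL s ->
  Mw w x p.1 * Mw w x p.2 = Mw w x s.
Proof.
move=> /LL_mem [_ _ pe]; case: w => /=; last by rewrite mulr1.
by rewrite /mp -big_cat (perm_big _ pe).
Qed.

Lemma fact_mul k1 k2 : (k1`! * k2`! <= (k1 + k2)`!)%N.
Proof.
have := bin_fact (leq_addr k2 k1); rewrite addKn => <-.
by apply: leq_pmull; rewrite bin_gt0 leq_addr.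
Qed.

Lemma fact_powR (R : realType) (C : R) k1 k2 : 0 <= C ->
  (k1`!%:R `^ (C + 1)) * (k2`!%:R `^ (C + 1)) <= ((k1 + k2)`!%:R : R) `^ (C + 1).
Proof.
move=> C0; rewrite -powRM // -natrM; apply: ge0_ler_powR.
- by rewrite addr_ge0.
- by rewrite nnegrE ler0n.
- by rewrite nnegrE ler0n.
by rewrite ler_nat fact_mul.
Qed.

Lemma sb_mul (R : realType) d (U : set 'rV[R]_d) r f g K1 K2 a1 a2 C w :
  open U -> U `<=` unit_cube (R:=R) (d:=d) -> Dr U r f -> Dr U r g ->
  0 <= K1 -> 0 <= K2 -> 0 <= a1 -> 0 <= a2 -> 0 <= C ->
  sb U r K1 a1 C w f -> sb U r K2 a2 C w g ->
  sb U r (K1 * K2) (a1 + a2) C w (fun y => f y * g y).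
Proof.
move=> oU Uc df dg K10 K20 a10 a20 C0 bf bg s x ss hs Ux.
rewrite (leib oU df dg hs Ux) /LS -LL_sum mulr_sumr !mulr_suml.
apply: le_trans (ler_norm_sum _ _ _) _.
rewrite big_seq [X in _ <= X]big_seq; apply: ler_sum => p pin.
have [sb1 sb2 pe] := LL_mem pin.
have M1 := Mw_gt0 w p.1 (Uc _ Ux).
have M2 := Mw_gt0 w p.2 (Uc _ Ux).
have b1 := bf p.1 x (subseq_sorted (@ordle_trans d) sb1 ss)
   (le_ord_trans (LL_size1 pin) hs) Ux.
have b2 := bg p.2 x (subseq_sorted (@ordle_trans d) sb2 ss)
   (le_ord_trans (LL_size2 pin) hs) Ux.
rewrite normrM; apply: le_trans (ler_pM (normr_ge0 _) (normr_ge0 _) b1 b2) _.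
rewrite -(Mw_mul x w pin).
have -> : K1 * a1 ^+ size p.1 * (size p.1)`!%:R `^ (C + 1) / Mw w x p.1 *
  (K2 * a2 ^+ size p.2 * (size p.2)`!%:R `^ (C + 1) / Mw w x p.2) =
  (K1 * K2 * (a1 ^+ size p.1 * a2 ^+ size p.2)) *
  ((size p.1)`!%:R `^ (C + 1) * (size p.2)`!%:R `^ (C + 1)) / (Mw w x p.1 * Mw w x p.2).
  by rewrite invfM; ring.
apply: ler_wpM2r; first by rewrite invr_ge0 mulr_ge0 // ltW.
apply: ler_wpM2l; first by rewrite !mulr_ge0 // exprn_ge0.
have := perm_size pe; rewrite size_cat => <-.
exact: fact_powR.
Qed.

Lemma sb_equiv (R : realType) d (U : set 'rV[R]_d) r K a C w g :
  (forall (nu : 'I_d -> nat) x, le_ord (mi_abs nu) r -> U x ->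
    `|mderiv nu g x| <= K * a ^+ (mi_abs nu) * ((mi_abs nu)`!%:R) `^ (C + 1)
      / Mw w x (flat nu)) <-> sb U r K a C w g.
Proof.
split.
  move=> H s x ss; rewrite [s](sorted_flat ss) size_flat => hs Ux.
  exact: H.
move=> H nu x hs Ux.
have := H (flat nu) x (flat_sorted nu); rewrite size_flat => /(_ hs Ux).
by [].
Qed.

Lemma mild_sb (R : realType) d (U : set 'rV[R]_d) A B C r g :
  mild U A B C r g <-> isCr U r g /\ sb U r (B `^ (C + 1)) A C false g.
Proof.
rewrite /mild -sb_equiv /Mw; split => -[h1 h2]; split => // nu x hs Ux.
  by rewrite divr1; exact: h2.
by rewrite -[X in _ <= X]divr1; exact: h2.
Qed.

Lemma weakly_sb (R : realType) d (U : set 'rV[R]_d) A B C r g :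
  weakly_mild U A B C r g <-> isCr U r g /\ sb U r (B `^ (C + 1)) A C true g.
Proof.
rewrite /weakly_mild -sb_equiv /Mw; split => -[h1 h2]; split => // nu x hs Ux.
  by rewrite mp_flat; exact: h2.
by rewrite -mp_flat; exact: h2.
Qed.

Lemma prod_gen (R : realType) d (U : set 'rV[R]_d) A B C r w :
  open U -> U `<=` unit_cube (R:=R) (d:=d) -> 0 < A -> 0 < B -> 0 <= C ->
  forall l (f : 'I_l.+1 -> 'rV[R]_d -> R),
  (forall j, isCr U r (f j) /\ sb U r (B `^ (C + 1)) A C w (f j)) ->
  isCr U r (fun x => \prod_(j < l.+1) f j x) /\
  sb U r ((B ^+ l.+1) `^ (C + 1)) (l.+1%:R * A) C w (fun x => \prod_(j < l.+1) f j x).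
Proof.
move=> oU Uc A0 B0 C0; elim=> [|l IH] f H.
  have -> : (fun x => \prod_(j < 1) f j x) = f ord0.
    by apply: funext => x; rewrite big_ord1.
  by rewrite expr1 mul1r; exact: H.
have -> : (fun x => \prod_(j < l.+2) f j x) =
    (fun x => f ord0 x * (fun y => \prod_(j < l.+1) f (lift ord0 j) y) x).
  by apply: funext => x; rewrite big_ord_recl.
have [c1 b1] := H ord0.
have [c2 b2] := IH (fun j => f (lift ord0 j)) (fun j => H _).
split; first exact: isCr_mul.
have -> : (B ^+ l.+2) `^ (C + 1) = B `^ (C + 1) * (B ^+ l.+1) `^ (C + 1).
  rewrite -powRM -?exprS //; [exact: ltW | exact: exprn_ge0 (ltW B0)].
have -> : (l.+2)%:R * A = A + (l.+1)%:R * A by rewrite -nat1r mulrDl mul1r.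
apply: sb_mul => //.
- exact: c1.1.
- exact: c2.1.
- exact: powR_ge0.
- exact: powR_ge0.
- exact: ltW.
- by rewrite mulr_ge0 // ltW.
Qed.

Theorem mainTheorem7 (R : realType) (d : nat) (U : set 'rV[R]_d)
  (A B C : R) (r : option nat) (l : nat) (f : 'I_l -> 'rV[R]_d -> R) :
  open U -> U `<=` @unit_cube R d ->
  0 < A -> 0 < B -> 0 <= C ->
  (if r is Some n then (0 < n)%N else true) ->
  (1 <= l)%N ->
  ((forall j, mild U A B C r (f j)) ->
     mild U (l%:R * A) (B ^+ l) C r (fun x => \prod_(j < l) f j x)) /\
  ((forall j, weakly_mild U A B C r (f j)) ->
     weakly_mild U (l%:R * A) (B ^+ l) C r (fun x => \prod_(j < l) f j x)).
Proof.
move=> oU Uc A0 B0 C0 _; case: l f => [//|l] f _; split => H.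
  apply/mild_sb; apply: (prod_gen (w:=false) oU Uc A0 B0 C0) => j.
  exact/mild_sb.
apply/weakly_sb; apply: (prod_gen (w:=true) oU Uc A0 B0 C0) => j.
exact/weakly_sb.
Qed.
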